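(* There is an algorithm which, given $\delta\in(0,1)$ and a sequence of $m$ events, produces non-decreasing estimates $v_t$ (for $t=1,\dots,m$) of the number $t$ of events seen so far such that, for any fixed $t\in[m]$, with probability at least $1-\delta$, $$\frac{\delta}{12\log m}\,t\le v_t\le\frac1\delta\,t.$$ The algorithm uses $O(\log\log m)$ bits of space. *)

(* Defs.v *)
From mathcomp Require Import all_boot all_order all_algebra.
From mathcomp Require Import reals exp.
Set Implicit Arguments. Unset Strict Implicit. Unset Printing Implicit Defensive.
Import Order.TTheory GRing.Theory Num.Theory.
Local Open Scope ring_scope.

(* A randomized streaming counter with n.+1 memory states ('I_n.+1),
   i.e. about log2 (n.+1) bits of memory.  It starts in state [init];
   on each event it moves from state i to state j with probability P i j;
   after each event it outputs the estimate [est] of its current state. *)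

Definition log2 {R : realType} (x : R) : R := ln x / ln 2.

Definition stochastic {R : realType} n (P : 'M[R]_n.+1) : Prop :=
  (forall i j, 0 <= P i j) /\ (forall i, \sum_j P i j = 1).

(* estimates are non-decreasing along every possible run *)
Definition monotone_est {R : realType} n (P : 'M[R]_n.+1) (est : 'I_n.+1 -> R)
  : Prop := forall i j, 0 < P i j -> est i <= est j.

Definition state_dist {R : realType} n (P : 'M[R]_n.+1) (init : 'I_n.+1) (t : nat)
  : 'rV[R]_n.+1 := (delta_mx 0 init : 'rV[R]_n.+1) *m (P ^+ t).

Definition prob_est {R : realType} n (P : 'M[R]_n.+1) (init : 'I_n.+1)
  (est : 'I_n.+1 -> R) (t : nat) (A : R -> bool) : R :=
  \sum_(j | A (est j)) state_dist P init t 0 j.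

(* Main.v *)
Require Import Defs.
From mathcomp Require Import all_boot all_order all_algebra.
From mathcomp Require Import reals exp.
From mathcomp Require Import ring lra.
Import Order.TTheory GRing.Theory Num.Theory.
Local Open Scope ring_scope.

Definition pr (R : realType) (L i : nat) : R := if (i < L)%N then (2 ^+ i)^-1 else 0.
Definition Pm (R : realType) (L : nat) : 'M[R]_L.+1 :=
  \matrix_(i, j) ((val j == val i)%:R * (1 - pr R L i) + (val j == (val i).+1)%:R * pr R L i).
Definition Tf (R : realType) (L : nat) (f : nat -> R) (i : nat) : R :=
  (1 - pr R L i) * f i + pr R L i * f i.+1.
Definition Ex (R : realType) (L t : nat) (f : nat -> R) : R :=
  \sum_(j < L.+1) state_dist (Pm R L) ord0 t 0 j * f (val j).

Lemma pr_ge0 (R : realType) L i : 0 <= pr R L i.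
Proof. rewrite /pr; case: ifP => // _; rewrite invr_ge0 exprn_ge0 //. Qed.

Lemma pr_le1 (R : realType) L i : pr R L i <= 1.
Proof.
rewrite /pr; case: ifP => // _; rewrite invf_le1 ?exprn_ege1 ?exprn_gt0 //.
by rewrite ler1n.
Qed.

Lemma row_sum (R : realType) L (i : 'I_L.+1) (f : nat -> R) :
  \sum_j Pm R L i j * f (val j) = Tf R L f i.
Proof.
rewrite /Tf.
under eq_bigr => j _ do rewrite mxE mulrDl.
rewrite big_split /=; congr (_ + _).
  rewrite (bigD1 i) //= eqxx mul1r big1 ?addr0 ?[_ * f i]mulrC //.
  by move=> j /negbTE; rewrite -val_eqE /= => ->; rewrite !mul0r.
case: (ltnP i L) => iL.
  have jP : ((val i).+1 < L.+1)%N by [].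
  rewrite (bigD1 (Ordinal jP)) //= eqxx mul1r big1 ?addr0 ?[_ * f _]mulrC //.
  by move=> j /negbTE; rewrite -val_eqE /= => ->; rewrite !mul0r.
have -> : pr R L i = 0 by rewrite /pr ltnNge iL.
by rewrite mul0r big1 // => j _; rewrite !mulr0 mul0r.
Qed.

Lemma Ex0 (R : realType) L f : Ex R L 0 f = f 0%N.
Proof.
rewrite /Ex /state_dist expr0 mulmx1 (bigD1 ord0) //= mxE eqxx /= mul1r big1 ?addr0 //.
by move=> j /negbTE jn; rewrite mxE jn andbF mul0r.
Qed.

Lemma ExS (R : realType) L t f : Ex R L t.+1 f = Ex R L t (Tf R L f).
Proof.
rewrite /Ex {1}/state_dist exprSr mulmxA.
under eq_bigr => j _ do rewrite mxE mulr_suml.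
rewrite exchange_big /=; apply: eq_bigr => i _.
by rewrite -row_sum mulr_sumr; apply: eq_bigr => j _; rewrite mulrA.
Qed.

Lemma dist_ge0 (R : realType) L t j : 0 <= state_dist (Pm R L) ord0 t 0 j.
Proof.
elim: t j => [|t IH] j.
  by rewrite /state_dist expr0 mulmx1 mxE ler0n.
rewrite /state_dist exprSr mulmxA mxE; apply: sumr_ge0 => i _.
apply: mulr_ge0; first exact: IH.
rewrite mxE addr_ge0 // mulr_ge0 ?ler0n ?subr_ge0 ?pr_le1 ?pr_ge0 //.
Qed.

Lemma Ex_mono (R : realType) L t (f g : nat -> R) :
  (forall i, (i <= L)%N -> f i <= g i) -> Ex R L t f <= Ex R L t g.
Proof.
move=> H; apply: ler_sum => j _; apply: ler_wpM2l; first exact: dist_ge0.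
exact: H (ltn_ord j).
Qed.

Lemma Ex_lin (R : realType) L t a b (f g : nat -> R) :
  Ex R L t (fun i => a * f i + b * g i) = a * Ex R L t f + b * Ex R L t g.
Proof.
rewrite /Ex !mulr_sumr -big_split /=; apply: eq_bigr => j _.
by rewrite mulrDr !mulrA ![_ * a]mulrC ![_ * b]mulrC.
Qed.

Lemma Ex_ext (R : realType) L t (f g : nat -> R) :
  (forall i, (i <= L)%N -> f i = g i) -> Ex R L t f = Ex R L t g.
Proof. by move=> H; apply: eq_bigr => j _; rewrite H // -ltnS ltn_ord. Qed.

Lemma Ex1 (R : realType) L t : Ex R L t (fun _ => 1) = 1.
Proof.
elim: t => [|t IH]; first by rewrite Ex0.
by rewrite ExS -{2}IH; apply: Ex_ext => i _; rewrite /Tf !mulr1 subrK.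
Qed.

Lemma pr_le (R : realType) L i : pr R L i <= (2 ^+ i)^-1.
Proof. rewrite /pr; case: ifP => // _; rewrite invr_ge0 exprn_ge0 //. Qed.

Lemma Ex0f (R : realType) L t : Ex R L t (fun _ => 0) = 0.
Proof. by rewrite /Ex big1 // => j _; rewrite mulr0. Qed.

Lemma Ex_ge0 (R : realType) L t (f : nat -> R) :
  (forall i, 0 <= f i) -> 0 <= Ex R L t f.
Proof. by move=> H; rewrite -(Ex0f R L t); apply: Ex_mono => i _; apply: H. Qed.

Lemma upper_bound (R : realType) L l t : (0 < l)%N ->
  Ex R L t (fun i => (l <= i)%:R) <= t%:R * (2 ^+ l.-1)^-1.
Proof.
move=> l0; set q : R := (2 ^+ l.-1)^-1.
have q0 : 0 <= q by rewrite invr_ge0 exprn_ge0.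
elim: t => [|t IH].
  by rewrite Ex0 mul0r; case: l l0 {q q0}.
rewrite ExS.
apply: le_trans (_ : Ex R L t (fun i => 1 * (l <= i)%:R + q * 1) <= _).
  apply: Ex_mono => i _; rewrite /Tf mul1r mulr1.
  case: (leqP l i) => li.
    by rewrite (leq_trans li (leqnSn i)) !mulr1 subrK lerDl.
  case: (ltngtP l i.+1) => li2.
  - by move: li2; rewrite ltnS leqNgt li.
  - by rewrite !mulr0 addr0 add0r.
  - by rewrite mulr0 mulr1 add0r /q li2 /= add0r pr_le.
by rewrite Ex_lin Ex1 mul1r mulr1 mulrSr mulrDl mul1r lerD2r.
Qed.

Lemma lower_bound (R : realType) L l t : (l <= L)%N -> (0 < t)%N ->
  Ex R L t (fun i => (i < l)%:R) <= 2 ^+ l / t%:R.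
Proof.
move=> lL t0.
set u : nat -> R := fun i => (i < l)%:R.
set h : nat -> R := fun i => if (i < l)%N then 2 ^+ l - 2 ^+ i else 0.
have h0 : forall i, 0 <= h i.
  move=> i; rewrite /h; case: ifP => // il.
  by rewrite subr_ge0 ler_eXn2l ?ltr1n // ltnW.
have Th : forall i, Tf R L h i = 1 * h i + (-1) * u i.
  move=> i; rewrite /Tf /h /u; case: (ltnP i l) => il; last first.
    by rewrite ltnNge (leq_trans il (leqnSn _)) /= !mulr0 !addr0.
  rewrite /pr (leq_trans il lL) /=.
  have -> : (if (i.+1 < l)%N then 2 ^+ l - 2 ^+ i.+1 else 0) = 2 ^+ l - 2 ^+ i.+1 :> R.
    case: ifP => //; move: il; rewrite leq_eqVlt => /orP [/eqP -> _|-> //].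
    by rewrite subrr.
  have x0 : (2 ^+ i : R) != 0 by rewrite expf_neq0 // pnatr_eq0.
  rewrite exprS; field; exact: x0.
have Tu : forall i, Tf R L u i <= u i.
  move=> i; rewrite /Tf /u; case: (ltnP i l) => il; last first.
    by rewrite ltnNge (leq_trans il (leqnSn _)) /= !mulr0 addr0.
  have := pr_ge0 R L i; have : ((i.+1 < l)%:R : R) <= 1 by rewrite lern1 leq_b1.
  have : (0 : R) <= (i.+1 < l)%:R by rewrite ler0n.
  rewrite /= mulr1; nra.
have key : forall t, Ex R L t h + t%:R * Ex R L t u <= h 0%N.
  elim=> [|s IH]; first by rewrite Ex0 mul0r addr0.
  apply: le_trans IH; rewrite !ExS.
  rewrite (@Ex_ext R L s _ (fun i => 1 * h i + (-1) * u i)); last by move=> i _; apply: Th.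
  rewrite Ex_lin mul1r mulN1r -addrA lerD2l.
  apply: le_trans (_ : - Ex R L s u + s.+1%:R * Ex R L s u <= _).
    by rewrite lerD2l ler_wpM2l ?ler0n // Ex_mono.
  rewrite mulrSr mulrDl mul1r; lra.
have := key t.
have hge : 0 <= Ex R L t h by apply: Ex_ge0.
have t0' : (0 : R) < t%:R by rewrite ltr0n.
rewrite ler_pdivlMr // => H.
rewrite mulrC; apply: le_trans (_ : h 0%N <= _); first by lra.
rewrite /h; case: ifP => _; last by rewrite exprn_ge0.
by rewrite expr0 lerBlDr lerDl ler01.
Qed.

Lemma ln2_ge (R : realType) : 1 / 2 <= ln (2 : R).
Proof.
have := @le_ln1Dx R (- (1/2)); rewrite (_ : 1 + - (1/2) = (2:R)^-1); last by field.
rewrite lnV ?posrE // => H; have : -1 < - (1 / 2 : R) by lra.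
move=> /H; lra.
Qed.

Lemma pow2_ex (R : realType) (y : R) : exists l : nat, y < 2 ^+ l.
Proof.
have := @archi_boundP R `|y| (normr_ge0 y).
set n := Num.Def.archi_bound _ => H; exists n.
apply: le_lt_trans (ler_norm y) _; apply: lt_le_trans H _.
by rewrite -natrX ler_nat ltnW // ltn_expl.
Qed.

Lemma stoch (R : realType) L : stochastic (Pm R L).
Proof.
split.
  move=> i j; rewrite mxE addr_ge0 // mulr_ge0 ?ler0n ?subr_ge0 ?pr_le1 ?pr_ge0 //.
move=> i; have := row_sum R L i (fun _ => 1); under eq_bigr => j _ do rewrite mulr1.
by move=> ->; rewrite /Tf !mulr1 subrK.
Qed.

Lemma mono (R : realType) L : monotone_est (Pm R L) (fun i => 2 ^+ (val i) / 4).
Proof.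
move=> i j; rewrite mxE; case: eqP => [/val_inj -> _ //|_].
case: eqP => [-> _|_]; last by rewrite !mul0r addr0 ltxx.
by rewrite ler_wpM2r ?invr_ge0 ?ler0n // exprS ler_peMl ?exprn_ge0 ?ler1n.
Qed.

Lemma lnm_ge (R : realType) (m L : nat) : (2 ^ L <= m)%N ->
  L%:R * ln (2 : R) <= ln (m%:R : R).
Proof.
move=> Lm; have m0 : (0 < m)%N by apply: leq_trans Lm; rewrite expn_gt0.
rewrite mulr_natl -lnXn ?ltr0n // ler_ln ?posrE ?exprn_gt0 ?ltr0n //.
by rewrite -natrX ler_nat.
Qed.

Lemma space_bd (R : realType) (m L : nat) : (3 <= L)%N -> (2 ^ L <= m)%N ->
  log2 (L.+1%:R : R) <= 2 * log2 (log2 (m%:R : R)).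
Proof.
move=> L3 Lm.
have l2 : 0 < ln (2 : R) by have := ln2_ge R; lra.
have Ly := @lnm_ge R m L Lm.
set y := ln (m%:R : R) / ln 2.
have Ly' : L%:R <= y by rewrite /y ler_pdivlMr.
have L3' : (3 : R) <= L%:R by rewrite ler_nat.
have y0 : 0 < y by lra.
rewrite /log2 -/y mulrA; apply: ler_wpM2r; first by rewrite invr_ge0 ltW.
rewrite mulr_natl -lnXn // ler_ln ?posrE ?exprn_gt0 ?ltr0n //.
rewrite -addn1 natrD; nra.
Qed.

Theorem lemma5p1 (R : realType) :
  exists (C : R) (N : nat), forall m : nat, (N <= m)%N ->
  forall delta : R, 0 < delta < 1 ->
  exists (n : nat) (P : 'M[R]_n.+1) (init : 'I_n.+1) (est : 'I_n.+1 -> R),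
    [/\ stochastic P,
        monotone_est P est,
        log2 (n.+1)%:R <= C * log2 (log2 m%:R) &
        forall t : nat, (1 <= t <= m)%N ->
          1 - delta <=
          prob_est P init est t
            (fun v => (delta / (12 * ln m%:R) * t%:R <= v) && (v <= delta^-1 * t%:R))].
Proof.
exists 2, 8%N => m m8 delta /andP [d0 d1].
set L := trunc_log 2 m.
have m0 : (0 < m)%N by apply: leq_trans m8.
have Lm : (2 ^ L <= m)%N := trunc_logP (isT : (1 < 2)%N) m0.
have mL : (m < 2 ^ L.+1)%N := trunc_log_ltn m (isT : (1 < 2)%N).
have L3 : (3 <= L)%N := trunc_log_max (isT : (1 < 2)%N) (m8 : (2 ^ 3 <= m)%N).
exists L, (Pm R L), ord0, (fun i => 2 ^+ (val i) / 4).
split; [exact: stoch | exact: mono | exact: (@space_bd R m L L3 Lm) |].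
move=> t /andP [t1 tm].
set K := ln (m%:R : R).
have l2 := ln2_ge R.
have KL := @lnm_ge R m L Lm.
have L3' : (3 : R) <= L%:R by rewrite ler_nat.
have K43 : 4 / 3 <= K by rewrite -/K in KL; nra.
set a := delta / (12 * K) * t%:R.
set b := delta^-1 * t%:R.
have t0 : (1 : R) <= t%:R by rewrite ler1n.
have aK : a * (12 * K) = delta * t%:R by rewrite /a; field; lra.
have bd : b * delta = t%:R by rewrite /b; field; lra.
have a0 : 0 <= a by rewrite /a; apply: mulr_ge0; [apply: divr_ge0; lra|lra].
pose P1 := fun l : nat => 4 * a <= 2 ^+ l.
pose P2 := fun l : nat => 4 * b < 2 ^+ l.
have ex1 : exists l, P1 l.
  by have [l Hl] := pow2_ex R (4 * a); exists l; apply: ltW.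
have ex2 : exists l, P2 l by have [l Hl] := pow2_ex R (4 * b); exists l.
case: (ex_minnP ex1) => l1 Hl1 min1.
case: (ex_minnP ex2) => l2' Hl2 min2.
set u : nat -> R := fun i => (i < l1)%:R.
set g : nat -> R := fun i => (l2' <= i)%:R.
have l2pos : (0 < l2')%N.
  case: l2' Hl2 min2 {g} => // /= H _; exfalso.
  have : 1 <= b by rewrite -bd in t0; nra.
  move: H; rewrite /P2 expr0; lra.
rewrite /prob_est big_mkcond /=.
apply: le_trans (_ : Ex R L t (fun i => 1 * 1 + (-1) * (1 * u i + 1 * g i)) <= _).
  rewrite Ex_lin Ex1 (@Ex_lin R L t 1 1 u g) !mul1r mulN1r.
  suff [H1 H2] : Ex R L t u <= delta / 2 /\ Ex R L t g <= delta / 2 by lra.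
  split.
    case: (posnP l1) => [l10|l1p].
      by rewrite (@Ex_ext R L t u (fun _ => 0)) ?Ex0f ?divr_ge0 ?ltW // => i _; rewrite /u l10.
    have nP : ~~ P1 l1.-1.
      apply/negP => /min1; case: l1 l1p {min1 Hl1 u} => //= n _; rewrite ltnn.
      done.
    have hl : (2 : R) ^+ l1 < 8 * a.
      move: nP; rewrite /P1 -ltNge; case: l1 l1p {min1 Hl1 u} => //= n _.
      rewrite exprS; lra.
    have hl2 : (2 : R) ^+ l1 <= delta * t%:R / 2 by nra.
    have lL : (l1 <= L)%N.
      have : (2 : R) ^+ l1 < 2 ^+ L.
        have : (m%:R : R) < 2 ^+ L.+1 by rewrite -natrX ltr_nat.
        have : (t%:R : R) <= m%:R by rewrite ler_nat.
        rewrite exprS; nra.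
      by rewrite ltr_eXn2l ?ltr1n // => /ltnW.
    apply: le_trans (@lower_bound R L l1 t lL t1) _.
    rewrite ler_pdivrMr ?ltr0n //; lra.
  apply: le_trans (@upper_bound R L l2' t l2pos) _.
  have hX : 4 * b < 2 * 2 ^+ l2'.-1.
    by rewrite -exprS prednK.
  have X0 : (0 : R) < 2 ^+ l2'.-1 by rewrite exprn_gt0.
  rewrite -/(_ / _) ler_pdivrMr //; nra.
rewrite (_ : \sum_(i < L.+1) _ = Ex R L t (fun i => ((a <= 2 ^+ i / 4 <= b)%R : bool)%:R)); last first.
  by apply: eq_bigr => i _; case: ifP; rewrite ?mulr1 ?mulr0.
apply: Ex_mono => i _.
rewrite /u /g.
have c0 : (0:R) <= (a <= 2 ^+ i / 4 <= b)%R%:R by rewrite ler0n.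
have g0 : (0:R) <= (l2' <= i)%:R by rewrite ler0n.
have u0 : (0:R) <= (i < l1)%:R by rewrite ler0n.
case: (ltnP i l1) => h1; first by move: u0 g0 c0 => /= *; lra.
case: (leqP l2' i) => h2; first by move: u0 g0 c0 => /= *; lra.
have -> : (a <= 2 ^+ i / 4 <= b).
  apply/andP; split.
    have : (2 : R) ^+ l1 <= 2 ^+ i by rewrite ler_eXn2l ?ltr1n.
    move: Hl1; rewrite /P1; lra.
  have nP : ~~ P2 l2'.-1.
    by apply/negP => /min2; case: (l2') l2pos => //= n _; rewrite ltnn.
  have : (2 : R) ^+ i <= 2 ^+ l2'.-1.
    by rewrite ler_eXn2l ?ltr1n // -ltnS prednK.
  move: nP; rewrite /P2 -leNgt; lra.
by rewrite /=; lra.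
Qed.
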